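(* Let $H=(\mathbb N,\mathbb N,\mathbb N,p_1,p_2,p_3)$ with $\mathbb N=\{0,1,2,\dots\}$ and $p_1(k,\ell,m)=\ell+1$ if $k=\ell+1$ and $0$ otherwise, $p_2(k,\ell,m)=k$ if $k=\ell$ and $0$ otherwise, $p_3(k,\ell,m)=0$, with the pure belief structure. Then property B holds, $\overline{GR}^{\omega}=(\emptyset,\emptyset,\mathbb N)$, $\overline{GR}^{\omega+1}=(\emptyset,\emptyset,\emptyset)$, and $\overline{LR}^{\alpha}=\overline{GR}^{\alpha}$ for all ordinals $\alpha$; in particular the closure ordinal of both $\overline{GR}$ and $\overline{LR}$ is $\omega+1$.
   Context: Restrictions of $H$ are triples $(S_1,S_2,S_3)$ with $S_i\subseteq\mathbb N$, ordered componentwise. Pure belief structure: beliefs of player $i$ in $G=(S_1,S_2,S_3)$ are the joint strategies $s_{-i}\in S_{-i}=\prod_{j\ne i}S_j$, expected payoff is the payoff. $s_i\in BR_G(s_{-i})$ iff $p_i(s_i,s_{-i})\ge p_i(s_i',s_{-i})$ for all $s_i'\in S_i$. Property B: every $s_{-i}\in\prod_{j\ne i}\mathbb N$ has a best response in $H$. $GR(G)_i:=\{s_i\in\mathbb N\mid\exists s_{-i}\in S_{-i}: s_i\in BR_H(s_{-i})\}$; $LR(G)_i:=\{s_i\in\mathbb N\mid\exists s_{-i}\in S_{-i}: s_i\in BR_G(s_{-i})\}$; $\overline{T}(G):=T(G)\cap G$. Iterations: $T^0:=H$, $T^{\alpha+1}:=T(T^\alpha)$, $T^\beta:=\bigcap_{\alpha<\beta}T^\alpha$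 for limit $\beta$; closure ordinal = least $\alpha$ with $T^{\alpha+1}=T^\alpha$. *)

(* Defs.v *)
From Stdlib Require Import Arith PeanoNat.

Inductive Player := P1 | P2 | P3.

Definition player_eqb (i j : Player) : bool :=
  match i, j with P1, P1 | P2, P2 | P3, P3 => true | _, _ => false end.

Definition Profile := Player -> nat.

Definition upd (s : Profile) (i : Player) (x : nat) : Profile :=
  fun j => if player_eqb j i then x else s j.

Definition pay (i : Player) (s : Profile) : nat :=
  match i with
  | P1 => if Nat.eqb (s P1) (s P2 + 1) then s P2 + 1 else 0
  | P2 => if Nat.eqb (s P1) (s P2) then s P1 else 0
  | P3 => 0
  end.

Definition Restr := Player -> nat -> Prop.

Definition req (G G' : Restr) : Prop := forall i x, G i x <-> G' i x.

Definition Hfull : Restr := fun _ _ => True.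

(** Pure belief structure: beliefs of i are joint strategies s_{-i}
    (encoded as a profile whose i-th component is ignored).
    x ∈ BR_G(s_{-i}) iff x ∈ S_i and p_i(x,s_{-i}) >= p_i(y,s_{-i}) for all y ∈ S_i. *)
Definition BR (G : Restr) (i : Player) (s : Profile) (x : nat) : Prop :=
  G i x /\ forall y, G i y -> pay i (upd s i y) <= pay i (upd s i x).

Definition Opp (G : Restr) (i : Player) (s : Profile) : Prop :=
  forall j, j <> i -> G j (s j).

Definition PropertyB : Prop :=
  forall (i : Player) (s : Profile), exists x, BR Hfull i s x.

Definition GR (G : Restr) : Restr :=
  fun i x => exists s, Opp G i s /\ BR Hfull i s x.

Definition LR (G : Restr) : Restr :=
  fun i x => exists s, Opp G i s /\ BR G i s x.

Definition bar (T : Restr -> Restr) (G : Restr) : Restr :=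
  fun i x => T G i x /\ G i x.

(** ** Transfinite iteration along an arbitrary well-order (I, lt).
    Ordinals are represented by positions in a well-ordered index type. *)

Definition is_succ {I : Type} (lt : I -> I -> Prop) (j i : I) : Prop :=
  lt j i /\ forall k, lt k i -> lt k j \/ k = j.

Definition is_zero {I : Type} (lt : I -> I -> Prop) (i : I) : Prop :=
  ~ exists j, lt j i.

Definition is_limit {I : Type} (lt : I -> I -> Prop) (i : I) : Prop :=
  (exists j, lt j i) /\ ~ exists j, is_succ lt j i.

Definition is_omega {I : Type} (lt : I -> I -> Prop) (i : I) : Prop :=
  is_limit lt i /\ forall j, lt j i -> ~ is_limit lt j.

Definition iter_spec {I : Type} (lt : I -> I -> Prop)
    (T : Restr -> Restr) (s : I -> Restr) : Prop :=
  forall i,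
    (is_zero lt i -> req (s i) Hfull) /\
    (forall j, is_succ lt j i -> req (s i) (T (s j))) /\
    (is_limit lt i -> req (s i) (fun p x => forall j, lt j i -> s j p x)).

Definition R_eeN : Restr := fun p _ => match p with P3 => True | _ => False end.
Definition R_eee : Restr := fun _ _ => False.

(** Statement about an iteration s: values at ω and ω+1, and closure ordinal ω+1
    (least α with T^{α+1} = T^α is ω+1). *)
Definition iter_facts {I : Type} (lt : I -> I -> Prop) (s : I -> Restr) : Prop :=
  (forall w, is_omega lt w -> req (s w) R_eeN) /\
  (forall w w1, is_omega lt w -> is_succ lt w w1 -> req (s w1) R_eee) /\
  (* for every α < ω+1 (i.e. α ≤ ω), T^{α+1} ≠ T^α *)
  (forall a a1, is_succ lt a a1 -> ~ (exists w, is_omega lt w /\ lt w a) ->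
     ~ req (s a1) (s a)) /\
  (forall w w1 w2, is_omega lt w -> is_succ lt w w1 -> is_succ lt w1 w2 ->
     req (s w2) (s w1)).

(* Main.v *)
From Stdlib Require Import Arith Lia Classical.
Require Import Defs.

Definition F (n:nat) : Restr := fun p x =>
  match p with P1 => n <= 2*x | P2 => n <= 2*x+1 | P3 => True end.

Arguments Nat.div : simpl never.
Ltac payE := unfold pay, upd; simpl.

Lemma propB : PropertyB.
Proof.
  intros i s. destruct i.
  - exists (s P2 + 1). split; [exact I|]. intros y _. payE.
    rewrite Nat.eqb_refl. destruct (Nat.eqb _ _); lia.
  - exists (s P1). split; [exact I|]. intros y _. payE.
    rewrite Nat.eqb_refl. destruct (Nat.eqb _ _); lia.
  - exists 0. split; [exact I|]. intros y _. payE. lia.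
Qed.

Lemma GR_F n : req (bar GR (F n)) (F (S n)).
Proof.
  intros i x; destruct i; unfold bar, GR, F; simpl; split.
  - intros [[s [Hs [_ Hb]]] Hx]. specialize (Hs P2 ltac:(discriminate)). simpl in Hs.
    specialize (Hb (s P2 + 1) I). revert Hb; payE. rewrite Nat.eqb_refl.
    destruct (Nat.eqb_spec x (s P2 + 1)); intros; [subst x; lia|lia].
  - intros Hx. split; [|lia]. exists (fun _ => x - 1). split.
    + intros j Hj; destruct j; simpl; try lia; auto; congruence.
    + split; [exact I|]. intros y _. payE.
      destruct (Nat.eqb_spec y (x-1+1)); destruct (Nat.eqb_spec x (x-1+1)); lia.
  - intros [[s [Hs [_ Hb]]] Hx]. specialize (Hs P1 ltac:(discriminate)). simpl in Hs.
    specialize (Hb (s P1) I). revert Hb; payE. rewrite Nat.eqb_refl.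
    destruct (Nat.eqb_spec (s P1) x); intros; lia.
  - intros Hx. split; [|lia]. exists (fun _ => x). split.
    + intros j Hj; destruct j; simpl; try lia; auto; congruence.
    + split; [exact I|]. intros y _. payE. rewrite Nat.eqb_refl.
      destruct (Nat.eqb_spec x y); lia.
  - intros _; exact I.
  - intros _. split; [|exact I]. exists (fun _ => n). split.
    + intros j Hj; destruct j; simpl; try lia; auto.
    + split; [exact I|]. intros y _. payE. lia.
Qed.

Lemma LR_F n : req (bar LR (F n)) (F (S n)).
Proof.
  intros i x; destruct i; unfold bar, LR, BR, F; simpl; split.
  - intros [[s [Hs [_ Hb]]] Hx]. specialize (Hs P2 ltac:(discriminate)). simpl in Hs.
    specialize (Hb (s P2 + 1) ltac:(simpl; lia)). revert Hb; payE. rewrite Nat.eqb_refl.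
    destruct (Nat.eqb_spec x (s P2 + 1)); intros; [subst x; lia|lia].
  - intros Hx. split; [|lia]. exists (fun _ => x - 1). split.
    + intros j Hj; destruct j; simpl; try lia; auto; congruence.
    + split; [simpl; lia|]. intros y _. payE.
      destruct (Nat.eqb_spec y (x-1+1)); destruct (Nat.eqb_spec x (x-1+1)); lia.
  - intros [[s [Hs [_ Hb]]] Hx]. specialize (Hs P1 ltac:(discriminate)). simpl in Hs.
    specialize (Hb (s P1) ltac:(simpl; lia)). revert Hb; payE. rewrite Nat.eqb_refl.
    destruct (Nat.eqb_spec (s P1) x); intros; lia.
  - intros Hx. split; [|lia]. exists (fun _ => x). split.
    + intros j Hj; destruct j; simpl; try lia; auto; congruence.
    + split; [simpl; lia|]. intros y _. payE. rewrite Nat.eqb_refl.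
      destruct (Nat.eqb_spec x y); lia.
  - intros _; exact I.
  - intros _. split; [|exact I]. exists (fun _ => n). split.
    + intros j Hj; destruct j; simpl; try lia; auto.
    + split; [exact I|]. intros y _. payE. lia.
Qed.

Lemma req_refl G : req G G. Proof. intros i x; tauto. Qed.
Lemma req_sym G G' : req G G' -> req G' G. Proof. intros H i x; specialize (H i x); tauto. Qed.
Lemma req_trans G1 G2 G3 : req G1 G2 -> req G2 G3 -> req G1 G3.
Proof. intros H1 H2 i x; specialize (H1 i x); specialize (H2 i x); tauto. Qed.

Lemma bar_resp (T : Restr -> Restr) :
  (forall G G', req G G' -> forall i x, T G i x -> T G' i x) ->
  forall G G', req G G' -> req (bar T G) (bar T G').
Proof.
  intros HT G G' H i x; unfold bar; split; intros [H1 H2]; split.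
  - eapply HT; eauto.
  - apply H; auto.
  - eapply HT; [apply req_sym; eauto|]; eauto.
  - apply H; auto.
Qed.

Lemma GR_mono : forall G G', req G G' -> forall i x, GR G i x -> GR G' i x.
Proof.
  intros G G' H i x [s [Hs Hb]]. exists s; split; auto.
  intros j Hj; apply H; auto.
Qed.

Lemma LR_mono : forall G G', req G G' -> forall i x, LR G i x -> LR G' i x.
Proof.
  intros G G' H i x [s [Hs [Hx Hb]]]. exists s; split; [|split].
  - intros j Hj; apply H; auto.
  - apply H; auto.
  - intros y Hy; apply Hb; apply H; auto.
Qed.

Lemma bar_eeN T : req (bar T R_eeN) R_eee ->  req (bar T R_eeN) R_eee.
Proof. auto. Qed.

Lemma GR_eeN : req (bar GR R_eeN) R_eee.
Proof.
  intros i x; unfold bar, R_eee; split; [|tauto].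
  intros [[s [Hs _]] Hx]. destruct i; simpl in Hx; auto.
  apply (Hs P1); discriminate.
Qed.

Lemma LR_eeN : req (bar LR R_eeN) R_eee.
Proof.
  intros i x; unfold bar, R_eee; split; [|tauto].
  intros [[s [Hs _]] Hx]. destruct i; simpl in Hx; auto.
  apply (Hs P1); discriminate.
Qed.

Lemma bar_eee T : req (bar T R_eee) R_eee.
Proof. intros i x; unfold bar, R_eee; tauto. Qed.

Lemma F0 : req Hfull (F 0).
Proof. intros i x; destruct i; unfold Hfull, F; split; auto; lia. Qed.

Lemma F_neq n : ~ req (F (S n)) (F n).
Proof.
  intros H. destruct (Nat.Even_or_Odd n) as [[m Hm]|[m Hm]].
  - specialize (H P1 m); simpl in H; lia.
  - specialize (H P2 m); simpl in H; lia.
Qed.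

Lemma wf_irrefl {I} (lt : I -> I -> Prop) : well_founded lt -> forall x, ~ lt x x.
Proof.
  intros wf x; induction x as [x IH] using (well_founded_ind wf).
  intros H; exact (IH x H H).
Qed.

Lemma wf_min {I} (lt : I -> I -> Prop) : well_founded lt ->
  forall P : I -> Prop, (exists x, P x) -> exists x, P x /\ forall y, lt y x -> ~ P y.
Proof.
  intros wf P [x0 Hx0]. apply NNPP; intros Hn.
  assert (forall x, ~ P x) as A.
  { intros x; induction x as [x IH] using (well_founded_ind wf).
    intros Px; apply Hn; exists x; split; auto. }
  exact (A x0 Hx0).
Qed.

Lemma limit_has_omega {I} (lt : I -> I -> Prop) : well_founded lt ->
  (forall a b c, lt a b -> lt b c -> lt a c) ->
  forall i, is_limit lt i -> exists w, is_omega lt w /\ (lt w i \/ w = i).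
Proof.
  intros wf tr i; induction i as [i IH] using (well_founded_ind wf); intros Hl.
  destruct (classic (exists j, lt j i /\ is_limit lt j)) as [[j [Hj Hjl]]|Hn].
  - destruct (IH j Hj Hjl) as [w [Hw [Hwj|Hwj]]].
    + exists w; split; eauto.
    + subst w; exists j; split; auto.
  - exists i; split; auto. split; auto. intros j Hj Hjl; apply Hn; eauto.
Qed.

Lemma succ_below {I} (lt : I -> I -> Prop) : well_founded lt ->
  (forall a b c, lt a b -> lt b c -> lt a c) ->
  (forall a b, lt a b \/ a = b \/ lt b a) ->
  forall i j, is_limit lt i -> lt j i -> exists k, is_succ lt j k /\ lt k i.
Proof.
  intros wf tr tot i j [_ Hns] Hji.
  assert (exists k, lt j k /\ lt k i) as Ex.
  { apply NNPP; intros Hn; apply Hns; exists j; split; auto.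
    intros k Hk. destruct (tot k j) as [h|[h|h]]; auto.
    exfalso; apply Hn; eauto. }
  destruct (wf_min lt wf _ Ex) as [k [[Hjk Hki] Hmin]].
  exists k; split; auto. split; auto.
  intros m Hm. destruct (tot m j) as [h|[h|h]]; auto.
  exfalso; apply (Hmin m Hm); split; eauto.
Qed.

Definition fin {I} (lt : I -> I -> Prop) i := forall w, is_omega lt w -> ~ (lt w i \/ w = i).

Definition Q {I} (lt : I -> I -> Prop) (s1 s2 : I -> Restr) i :=
  (fin lt i -> exists n, req (s1 i) (F n) /\ req (s2 i) (F n)) /\
  (is_omega lt i -> req (s1 i) R_eeN /\ req (s2 i) R_eeN) /\
  (forall w, is_omega lt w -> lt w i -> req (s1 i) R_eee /\ req (s2 i) R_eee).

Lemma inter_eeN {I} (lt : I -> I -> Prop) (s : I -> Restr) i :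
  (forall j, lt j i -> exists n, req (s j) (F n)) ->
  (forall m, exists j, lt j i /\ exists n, m <= n /\ req (s j) (F n)) ->
  req (fun p x => forall j, lt j i -> s j p x) R_eeN.
Proof.
  intros Hall Hbig p x; split.
  - intros H. destruct p; simpl; auto.
    + destruct (Hbig (2*x+2)) as [j [Hj [n [Hn Hr]]]].
      specialize (H j Hj). apply Hr in H; simpl in H; lia.
    + destruct (Hbig (2*x+2)) as [j [Hj [n [Hn Hr]]]].
      specialize (H j Hj). apply Hr in H; simpl in H; lia.
  - intros H j Hj. destruct p; simpl in H; try tauto.
    destruct (Hall j Hj) as [n Hn]. apply Hn; exact Logic.I.
Qed.

Lemma inv {I} (lt : I -> I -> Prop) : well_founded lt ->
  (forall a b c, lt a b -> lt b c -> lt a c) ->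
  (forall a b, lt a b \/ a = b \/ lt b a) ->
  forall T1 T2 : Restr -> Restr,
  (forall G G', req G G' -> req (T1 G) (T1 G')) ->
  (forall G G', req G G' -> req (T2 G) (T2 G')) ->
  (forall n, req (T1 (F n)) (F (S n))) ->
  (forall n, req (T2 (F n)) (F (S n))) ->
  req (T1 R_eeN) R_eee -> req (T2 R_eeN) R_eee ->
  req (T1 R_eee) R_eee -> req (T2 R_eee) R_eee ->
  forall s1 s2, iter_spec lt T1 s1 -> iter_spec lt T2 s2 ->
  forall i, Q lt s1 s2 i.
Proof.
  intros wf tr tot T1 T2 R1 R2 F1 F2 N1 N2 E1 E2 s1 s2 S1 S2 i.
  induction i as [i IH] using (well_founded_ind wf).
  destruct (S1 i) as [Z1 [Su1 L1]]. destruct (S2 i) as [Z2 [Su2 L2]].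
  destruct (classic (exists j, lt j i)) as [Hne|Hz].
  - destruct (classic (exists j, is_succ lt j i)) as [[j Hj]|Hns].
    + destruct (IH j (proj1 Hj)) as [A [B C]].
      split; [|split].
      * intros Hf.
        assert (Hfj : fin lt j).
        { intros w Hw Hwj; apply (Hf w Hw); left.
          destruct Hwj as [h|h]; [exact (tr _ _ _ h (proj1 Hj))|subst w; exact (proj1 Hj)]. }
        destruct (A Hfj) as [n [h1 h2]].
        exists (S n); split.
        -- eapply req_trans; [apply Su1; eauto|]. eapply req_trans; [apply R1; eauto|]. auto.
        -- eapply req_trans; [apply Su2; eauto|]. eapply req_trans; [apply R2; eauto|]. auto.
      * intros [[_ Hn] _]. exfalso; apply Hn; eauto.
      * intros w Hw Hwi. destruct (proj2 Hj w Hwi) as [h|h].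
        -- destruct (C w Hw h) as [c1 c2]. split.
           ++ eapply req_trans; [apply Su1; eauto|]. eapply req_trans; [apply R1; eauto|]. auto.
           ++ eapply req_trans; [apply Su2; eauto|]. eapply req_trans; [apply R2; eauto|]. auto.
        -- subst w. destruct (B Hw) as [b1 b2]. split.
           ++ eapply req_trans; [apply Su1; eauto|]. eapply req_trans; [apply R1; eauto|]. auto.
           ++ eapply req_trans; [apply Su2; eauto|]. eapply req_trans; [apply R2; eauto|]. auto.
    + assert (Hl : is_limit lt i) by (split; auto).
      split; [|split].
      * intros Hf. destruct (limit_has_omega lt wf tr i Hl) as [w [Hw Hwi]].
        exfalso; exact (Hf w Hw Hwi).
      * intros Hom.
        assert (Hfin : forall j, lt j i -> fin lt j).
        { intros j Hj w Hw Hwj. apply (proj2 Hom w).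
          - destruct Hwj as [h|h]; [eauto|subst; auto].
          - apply Hw. }
        assert (Hbig : forall m, exists j, lt j i /\ exists n, m <= n /\
                   req (s1 j) (F n) /\ req (s2 j) (F n)).
        { induction m as [|m [j [Hj [n [Hn [h1 h2]]]]]].
          - destruct Hne as [j Hj]. destruct (proj1 (IH j Hj) (Hfin j Hj)) as [n [h1 h2]].
            exists j; split; auto; exists n; split; auto; lia.
          - destruct (succ_below lt wf tr tot i j Hl Hj) as [k [Hk Hki]].
            exists k; split; auto; exists (S n); split; [lia|split].
            + destruct (S1 k) as [_ [Su _]].
              eapply req_trans; [apply Su; eauto|]. eapply req_trans; [apply R1; eauto|]. auto.
            + destruct (S2 k) as [_ [Su _]].
              eapply req_trans; [apply Su; eauto|]. eapply req_trans; [apply R2; eauto|]. auto. }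
        split.
        -- eapply req_trans; [apply L1; auto|]. apply inter_eeN.
           ++ intros j Hj. destruct (proj1 (IH j Hj) (Hfin j Hj)) as [n [h1 h2]]; eauto.
           ++ intros m; destruct (Hbig m) as [j [Hj [n [Hn [h1 h2]]]]]; eauto.
        -- eapply req_trans; [apply L2; auto|]. apply inter_eeN.
           ++ intros j Hj. destruct (proj1 (IH j Hj) (Hfin j Hj)) as [n [h1 h2]]; eauto.
           ++ intros m; destruct (Hbig m) as [j [Hj [n [Hn [h1 h2]]]]]; eauto.
      * intros w Hw Hwi.
        destruct (succ_below lt wf tr tot i w Hl Hwi) as [k [Hk Hki]].
        destruct (proj2 (proj2 (IH k Hki)) w Hw (proj1 Hk)) as [c1 c2].
        split.
        -- eapply req_trans; [apply L1; auto|]. intros p x; split; [|unfold R_eee; tauto].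
           intros H; apply (c1 p x); apply H; auto.
        -- eapply req_trans; [apply L2; auto|]. intros p x; split; [|unfold R_eee; tauto].
           intros H; apply (c2 p x); apply H; auto.
  - split; [|split].
    + intros _. exists 0; split.
      * eapply req_trans; [apply Z1; auto|]. apply F0.
      * eapply req_trans; [apply Z2; auto|]. apply F0.
    + intros [[h _] _]; exfalso; auto.
    + intros w _ h; exfalso; eauto.
Qed.

Lemma facts {I} (lt : I -> I -> Prop) : well_founded lt ->
  (forall a b c, lt a b -> lt b c -> lt a c) ->
  forall T (s : I -> Restr),
  (forall G G', req G G' -> req (T G) (T G')) ->
  (forall n, req (T (F n)) (F (S n))) ->
  iter_spec lt T s ->
  (forall i, (fin lt i -> exists n, req (s i) (F n)) /\
     (is_omega lt i -> req (s i) R_eeN) /\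
     (forall w, is_omega lt w -> lt w i -> req (s i) R_eee)) ->
  iter_facts lt s.
Proof.
  intros wf tr T s R Fn Sp H.
  split; [|split; [|split]].
  - intros w Hw; apply (H w); auto.
  - intros w w1 Hw H1. apply (H w1) with w; auto. apply H1.
  - intros a a1 Ha Hno Hr.
    destruct (classic (is_omega lt a)) as [Hom|Hnom].
    + assert (h1 := proj1 (proj2 (H a)) Hom).
      assert (h2 := proj2 (proj2 (H a1)) a Hom (proj1 Ha)).
      specialize (Hr P3 0). specialize (h1 P3 0). specialize (h2 P3 0).
      unfold R_eeN, R_eee in *. tauto.
    + destruct (proj1 (H a)) as [n Hn].
      { intros w Hw [h|h]; [apply Hno; eauto|subst; auto]. }
      apply (F_neq n).
      apply req_trans with (s a1).
      * apply req_sym. eapply req_trans; [apply (proj1 (proj2 (Sp a1)) a Ha)|].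
        eapply req_trans; [apply R; eauto|]. auto.
      * eapply req_trans; eauto.
  - intros w w1 w2 Hw H1 H2.
    eapply req_trans; [apply (proj2 (proj2 (H w2))) with w; auto|].
    + eapply tr; [apply H1|apply H2].
    + apply req_sym; apply (proj2 (proj2 (H w1))) with w; auto. apply H1.
Qed.

Theorem mainTheorem15 :
  PropertyB /\
  forall (I : Type) (lt : I -> I -> Prop),
    well_founded lt ->
    (forall a b c, lt a b -> lt b c -> lt a c) ->
    (forall a b, lt a b \/ a = b \/ lt b a) ->
    forall (sGR sLR : I -> Restr),
      iter_spec lt (bar GR) sGR ->
      iter_spec lt (bar LR) sLR ->
      (forall a, req (sLR a) (sGR a)) /\
      iter_facts lt sGR /\ iter_facts lt sLR.
Proof.
  split; [exact propB|].
  intros I lt wf tr tot sGR sLR HG HL.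
  assert (RG := bar_resp GR GR_mono). assert (RL := bar_resp LR LR_mono).
  pose proof (inv lt wf tr tot (bar GR) (bar LR) RG RL GR_F LR_F GR_eeN LR_eeN
               (bar_eee GR) (bar_eee LR) sGR sLR HG HL) as Q0.
  split; [|split].
  - intros a. destruct (Q0 a) as [A [B C]].
    destruct (classic (fin lt a)) as [Hf|Hnf].
    + destruct (A Hf) as [n [h1 h2]]. eapply req_trans; [exact h2|]. apply req_sym; auto.
    + unfold fin in Hnf. apply NNPP; intros Hc; apply Hnf; intros w Hw [h|h].
      * destruct (C w Hw h) as [c1 c2]. apply Hc; eapply req_trans; [exact c2|]; apply req_sym; auto.
      * subst; destruct (B Hw) as [b1 b2]. apply Hc; eapply req_trans; [exact b2|]; apply req_sym; auto.
  - apply (facts lt wf tr (bar GR) sGR RG GR_F HG).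
    intros i; destruct (Q0 i) as [A [B C]]; split; [|split].
    + intros Hf; destruct (A Hf) as [n [h _]]; eauto.
    + intros h; apply B; auto.
    + intros w Hw h; apply (C w Hw h).
  - apply (facts lt wf tr (bar LR) sLR RL LR_F HL).
    intros i; destruct (Q0 i) as [A [B C]]; split; [|split].
    + intros Hf; destruct (A Hf) as [n [_ h]]; eauto.
    + intros h; apply B; auto.
    + intros w Hw h; apply (C w Hw h).
Qed.
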